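(* Let $V$ be a finite-dimensional real vector space with skew-symmetric bilinear forms $A$ and $B$, $B$ non-degenerate, such that the Jordan–Kronecker decomposition of $(V, A, B)$ consists only of real Jordan blocks with the same complex eigenvalue $\lambda = \alpha + i\beta$, $\beta \neq 0$. Let $J$ be the semisimple part of $\frac{P - \alpha E}{\beta}$, where $P = B^{-1}A$. Then every automorphism $Q \in \mathrm{Aut}(V, A, B)$ commutes with $J$: $QJ = JQ$. Consequently there is a natural one-to-one correspondence $\mathrm{Aut}(V, A, B) \cong \mathrm{Aut}(V^{\mathbb{C}}, A^{\mathbb{C}}, B^{\mathbb{C}})$. Moreover, a subspace $U \subset V$ is invariant (under $\mathrm{Aut}(V,A,B)$) if and only if $U$ is $J$-invariant and the corresponding complex subspace $U^{\mathbb{C}}$ of $(V^{\mathbb{C}}, A^{\mathbb{C}}, B^{\mathbb{C}})$ is invariant (under $\mathrm{Aut}(V^{\mathbb{C}}, A^{\mathbb{C}}, B^{\mathbb{C}})$).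
   Context: $P = B^{-1}A$ means $A(u,v) = B(Pu,v)$. $J$ satisfies $J^2 = -E$ and is self-adjoint with respect to $A$ and $B$. $V^{\mathbb{C}}$ denotes $V$ regarded as a complex vector space via the complex structure $J$ (i.e. $i \cdot v := Jv$), and $A^{\mathbb{C}}(u,v) = A(u,v) - iA(u,Jv)$, $B^{\mathbb{C}}(u,v) = B(u,v) - iB(u,Jv)$ are complex bilinear forms on it. For a $J$-invariant real subspace $U$, $U^{\mathbb{C}}$ is $U$ regarded as a complex subspace of $V^{\mathbb{C}}$. $\mathrm{Aut}(V,A,B)$ (resp. $\mathrm{Aut}(V^{\mathbb{C}}, A^{\mathbb{C}}, B^{\mathbb{C}})$) is the group of real (resp. complex) linear automorphisms preserving both forms; a subspace is invariant if it is preserved by the corresponding group. A real Jordan block with eigenvalue $\alpha + i\beta$ of size $k$ is a $4k$-dimensional summand with basis in which $B = \begin{pmatrix}0 & \mathrm{diag}(E_2,\dots,E_2)\\ -\mathrm{diag}(E_2,\dots,E_2) & 0\end{pmatrix}$ and $A = \begin{pmatrix}0 & \mathcal{J}\\ -\mathcal{J}^T & 0\end{pmatrix}$, where $\mathcal{J}$ is the $k\times k$ block upper-bidiagonal matrix with diagonal blocks $\Lambda = \begin{pmatrix}\alpha & -\beta\\ \beta & \alpha\end{pmatrix}$ and superdiagonal blocks $E_2$ (the $2\times 2$ identity). *)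

(* Defs.v *)
From mathcomp Require Import all_boot all_order all_algebra.
From mathcomp Require Import separable.
From mathcomp Require Import complex.
Set Implicit Arguments. Unset Strict Implicit. Unset Printing Implicit Defensive.
Import Order.TTheory GRing.Theory Num.Theory.
Local Open Scope ring_scope.

(* V = 'rV[R]_n (row vectors); linear maps act on the right:
   the map with matrix Q sends u to u *m Q. *)
Section Defs.
Variable R : rcfType.

Definition bform n (M : 'M[R]_n) (u v : 'rV[R]_n) : R := (u *m M *m v^T) 0 0.

(* P = B^{-1} A, i.e. A(u,v) = B(Pu,v); with maps acting on row vectors on
   the right this is the matrix A B^{-1}. *)
Definition Pop n (A B : 'M[R]_n) : 'M[R]_n := A *m invmx B.

(* the 2x2 block Lambda = [[a, -b], [b, a]] as a function of (row,col) in {0,1} *)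
Definition lam (a b : R) (r c : nat) : R :=
  if r == c then a else if r == 0%N then - b else b.

(* k x k block upper-bidiagonal matrix (size 2k), diagonal blocks Lambda,
   superdiagonal blocks E_2 ; index i lies in block i./2 at position odd i *)
Definition rJbidiag (a b : R) (k : nat) : 'M[R]_(k.*2) :=
  \matrix_(i, j)
    (if (i : nat)./2 == (j : nat)./2 then lam a b (odd i) (odd j)
     else if (j : nat)./2 == ((i : nat)./2).+1 then (odd i == odd j)%:R
     else 0).

(* the two Gram matrices of the real Jordan block of size k (dimension 4k) *)
Definition rJblockA (a b : R) (k : nat) : 'M[R]_(k.*2 + k.*2) :=
  block_mx 0 (rJbidiag a b k) (- (rJbidiag a b k)^T) 0.
Definition rJblockB (k : nat) : 'M[R]_(k.*2 + k.*2) :=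
  block_mx 0 1%:M (- 1%:M) 0.

(* The Jordan--Kronecker decomposition of (R^n, A, B) consists only of real
   Jordan blocks with eigenvalue a + i b: there is a basis (the rows of T) in
   which the Gram matrices of A and B are block diagonal with real Jordan
   blocks (of sizes k i) on the diagonal. *)
Definition JK_only_real_jordan (a b : R) n (A B : 'M[R]_n) : Prop :=
  exists (m : nat) (k : 'I_m -> nat)
         (T : 'M[R]_(\sum_(i < m) ((k i).*2 + (k i).*2), n)),
    [/\ row_free T, row_full T,
        T *m A *m T^T = \mxdiag_(i < m) rJblockA a b (k i)
      & T *m B *m T^T = \mxdiag_(i < m) rJblockB (k i)].

Definition peval_mx n (p : {poly R}) (S : 'M[R]_n) : 'M[R]_n :=
  \sum_(i < size p) p`_i *: S ^+ i.

Definition semisimple_mx n (S : 'M[R]_n) : Prop :=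
  exists p : {poly R}, separable_poly p /\ peval_mx p S = 0.

Definition semisimple_part n (X S : 'M[R]_n) : Prop :=
  [/\ semisimple_mx S, (exists e : nat, (X - S) ^+ e = 0)
    & S *m (X - S) = (X - S) *m S].

Definition autAB n (A B Q : 'M[R]_n) : Prop :=
  Q \in unitmx /\
  forall u v, bform A (u *m Q) (v *m Q) = bform A u v /\
              bform B (u *m Q) (v *m Q) = bform B u v.

Definition cform n (J M : 'M[R]_n) (u v : 'rV[R]_n) : R[i] :=
  Complex (bform M u v) (- bform M u (v *m J)).

(* Aut(V^C, A^C, B^C): complex-linear (= commuting with J) invertible maps
   preserving A^C and B^C *)
Definition autABC n (J A B Q : 'M[R]_n) : Prop :=
  [/\ Q \in unitmx, Q *m J = J *m Q &
      forall u v, cform J A (u *m Q) (v *m Q) = cform J A u v /\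
                  cform J B (u *m Q) (v *m Q) = cform J B u v].

(* subspaces are row spaces of matrices *)
Definition invariant_sub n (A B U : 'M[R]_n) : Prop :=
  forall Q, autAB A B Q -> (U *m Q <= U)%MS.

Definition invariant_subC n (J A B U : 'M[R]_n) : Prop :=
  forall Q, autABC J A B Q -> (U *m Q <= U)%MS.

End Defs.

(* Main.v *)
Require Import Defs.
From mathcomp Require Import all_boot all_order all_algebra.
From mathcomp Require Import separable complex.
From mathcomp Require Import zify ring.
Import Order.TTheory GRing.Theory Num.Theory.
Local Open Scope ring_scope.
Set Implicit Arguments. Unset Strict Implicit. Unset Printing Implicit Defensive.


Section G.
Variables (R : rcfType) (n : nat).
Local Notation M := 'M[R]_n.+1.

Lemma swap4 (a b c d : M) : a + b = c + d -> a - c = d - b.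
Proof. by move=> h; rewrite -[a](addrK b) h (addrC c d) addrAC addrK. Qed.

Lemma L0 (K E : M) (c : R) e : c != 0 -> E ^+ e = 0 -> K * E = c *: K -> K = 0.
Proof.
move=> c0 Ee KE.
have H m : K * E ^+ m = c ^+ m *: K.
  elim: m => [|m IH]; first by rewrite expr0 mulr1 scale1r.
  by rewrite exprSr mulrA IH -scalerAl KE scalerA -exprSr.
move: (H e); rewrite Ee mulr0 => /esym/eqP; rewrite scaler_eq0 expf_eq0 (negbTE c0) andbF /=.
by move/eqP.
Qed.

Lemma L1 (K E : M) e m : E ^+ e = 0 -> K * (2%:R - E) ^+ m = 0 -> K = 0.
Proof.
move=> Ee; elim: m K => [|m IH] K; first by rewrite expr0 mulr1.
rewrite exprSr mulrA => h; apply: IH.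
apply: (L0 (c := 2%:R) _ Ee); first by rewrite pnatr_eq0.
by move: h; rewrite mulrBr => /eqP; rewrite subr_eq0 => /eqP <-; rewrite mulr_natr scaler_nat.
Qed.

Lemma nilp_mul (x y : M) e : GRing.comm x y -> x ^+ e = 0 -> (x * y) ^+ e = 0.
Proof. by move=> c h; rewrite exprMn_comm // h mul0r. Qed.

Lemma nilp_add (x y : M) e f : GRing.comm x y -> x ^+ e = 0 -> y ^+ f = 0 ->
  (x + y) ^+ (e + f) = 0.
Proof.
move=> c he hf; rewrite exprDn_comm // big1 // => i _.
case: (leqP e (e + f - i)) => h.
  by rewrite -(subnKC h) exprD he mul0r mul0r mul0rn.
have hi : (f <= i)%N by move: h (ltn_ord i); lia.
by rewrite -(subnKC hi) exprD hf mul0r mulr0 mul0rn.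
Qed.

Lemma commS0 (S0 N0 Y : M) e : S0 * S0 = -1 -> GRing.comm S0 N0 -> N0 ^+ e = 0 ->
  GRing.comm Y (S0 + N0) -> GRing.comm Y S0.
Proof.
move=> SS cSN Ne cY.
pose K := Y + S0 * Y * S0.
have KS : K * S0 = Y * S0 - S0 * Y.
  by rewrite /K mulrDl -(mulrA _ S0) SS mulrN1.
have SK : S0 * K = S0 * Y - Y * S0.
  by rewrite /K mulrDr !mulrA SS mulN1r mulNr.
have hc : Y * S0 - S0 * Y = N0 * Y - Y * N0.
  by apply: (swap4 (b := Y * N0)); rewrite -mulrDr cY mulrDl.
have SCS : S0 * (Y * S0 - S0 * Y) * S0 = Y * S0 - S0 * Y.
  rewrite mulrBr mulrBl !mulrA SS mulN1r -(mulrA _ S0 S0) SS mulrN1.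
  by rewrite mulNr opprK addrC.
have e1 : N0 * K = N0 * Y + S0 * (N0 * Y) * S0.
  by rewrite /K mulrDr !mulrA cSN.
have e2 : K * N0 = Y * N0 + S0 * (Y * N0) * S0.
  by rewrite /K mulrDl -!mulrA -cSN.
have e3 : N0 * K - K * N0 = K * S0 + K * S0.
  rewrite e1 e2 opprD addrACA -mulrBl -mulrBr -hc SCS KS //.
have NK : N0 * K = K * (N0 + S0 + S0).
  by rewrite -addrA (mulrDr K N0) (mulrDr K S0) -e3 [RHS]addrC subrK.
set Mm := N0 + S0 + S0.
have H m : N0 ^+ m * K = K * Mm ^+ m.
  elim: m => [|m IH]; first by rewrite !expr0 mul1r mulr1.
  by rewrite exprSr -mulrA NK mulrA IH -mulrA -exprSr.
have hZ : Mm * - S0 = 2%:R - N0 * S0.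
  by rewrite /Mm mulrN !mulrDl SS !opprD !opprK -addrA addrC -mulr2n.
have cMS : GRing.comm Mm (- S0).
  by rewrite /GRing.comm mulrN mulNr /Mm !mulrDl !mulrDr cSN.
have K0 : K = 0.
  apply: (L1 (E := N0 * S0) (e := e) (m := e)).
    by apply: nilp_mul => //; rewrite /GRing.comm cSN.
  by rewrite -hZ exprMn_comm // mulrA -H Ne !mul0r.
by apply/eqP; rewrite -subr_eq0 -KS K0 mul0r.
Qed.
End G.


Section S.
Variables (R : rcfType) (n : nat).
Local Notation M := 'M[R]_n.+1.

Lemma pevalE (p : {poly R}) (J : M) : peval_mx p J = horner_mx J p.
Proof.
rewrite -{2}(coefK p) poly_def /peval_mx rmorph_sum /=.
apply: eq_bigr => i _; rewrite linearZ /= rmorphXn /= horner_mx_X //.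
Qed.

Lemma size2_root (g : {poly R}) : size g = 2%N -> exists x, root g x.
Proof.
move=> sg; have g1 : g`_1 != 0.
  by have := lead_coef_eq0 g; rewrite lead_coefE sg /= => ->; rewrite -size_poly_eq0 sg.
exists (- g`_0 / g`_1); rewrite /root horner_coef sg !big_ord_recr big_ord0 /=.
by rewrite add0r expr0 expr1 mulr1 mulrC divfK // addrN.
Qed.

Lemma sepq (J : M) (p : {poly R}) e : separable_poly p -> peval_mx p J = 0 ->
  (J * J + 1) ^+ e = 0 -> J * J + 1 = 0.
Proof.
move=> sp; rewrite pevalE => pJ ye.
pose q : {poly R} := 'X * 'X + 1.
have hq : horner_mx J q = J * J + 1 by rewrite rmorphD rmorphM rmorph1 /= horner_mx_X.
set y := J * J + 1 in ye hq *.
have cy r : GRing.comm (horner_mx J r) y by rewrite -hq; apply: comm_horner_mx2.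
have q0 : q != 0.
  by rewrite -size_poly_eq0 /q -expr2 size_addl ?size_polyXn ?size_poly1.
have sq : size q = 3%N.
  by rewrite /q -expr2 size_addl ?size_polyXn ?size_poly1.
case cop: (coprimep p q).
  case/Bezout_eq1_coprimepP: cop => [[u v]] /= /(congr1 (horner_mx J)).
  rewrite rmorphD !rmorphM rmorph1 /= pJ hq mulr0 add0r => h1.
  have : (1 : M) = 0.
    by rewrite -(expr1n _ e) -h1 exprMn_comm ?ye ?mulr0.
  by move=> h10; rewrite -[y]mulr1 h10 mulr0.
set g := gcdp p q.
have g0 : g != 0 by rewrite gcdp_eq0 negb_and q0 orbT.
have gq : g %| q by apply: dvdp_gcdr.
have sg : (size g <= 3)%N by rewrite -sq dvdp_leq.
have sg1 : size g != 1%N by move: cop; rewrite coprimep_def => /negbT.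
have sg0 : size g != 0%N by rewrite size_poly_eq0.
have [sg2|sg3] : size g = 2%N \/ size g = 3%N by lia.
  case: (size2_root sg2) => x; rewrite root_gcd => /andP[_].
  rewrite /root /q !hornerE => /eqP h.
  have : 0 < x * x + 1 by rewrite -expr2 ltr_wpDl ?sqr_ge0 ?ltr01.
  by rewrite h ltxx.
have qp : q %| p.
  have : g %= q by rewrite -dvdp_size_eqp // sg3 sq.
  by move/eqp_dvdl <-; apply: dvdp_gcdl.
have hp := divpK qp.
have cp : coprimep (p %/ q) q by apply: (separable_coprime sp); rewrite hp.
case/Bezout_eq1_coprimepP: cp => [[u v]] /= /(congr1 (horner_mx J)).
rewrite rmorphD !rmorphM rmorph1 /= hq => h1.
have hy : y = horner_mx J v * (y * y).
  have yq : horner_mx J (p %/ q) * y = 0.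
    by rewrite -hq -rmorphM /= hp pJ.
  rewrite -{1}[y]mulr1 -h1 mulrDr mulrA -(cy u) -mulrA -(cy (p %/ q)) yq mulr0 add0r.
  by rewrite mulrA -(cy v) -mulrA.
have hw : y = (horner_mx J v * y) * y by rewrite -mulrA.
have hm m : y = (horner_mx J v * y) ^+ m * y.
  elim: m => [|m IH]; first by rewrite expr0 mul1r.
  by rewrite exprSr -mulrA -hw.
by rewrite (hm e) exprMn_comm ?ye ?mulr0 ?mul0r.
Qed.
End S.


Section U.
Variables (R : rcfType) (n : nat).
Local Notation M := 'M[R]_n.+1.

Lemma commrB (x y z : M) : GRing.comm x y -> GRing.comm x z -> GRing.comm x (y - z).
Proof. by move=> a b; apply: commrD => //; apply: commrN. Qed.

Lemma uniqJ (S0 N0 J : M) e (p : {poly R}) f :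
  S0 * S0 = -1 -> GRing.comm S0 N0 -> N0 ^+ e = 0 ->
  separable_poly p -> peval_mx p J = 0 -> (S0 + N0 - J) ^+ f = 0 ->
  J * (S0 + N0 - J) = (S0 + N0 - J) * J -> J = S0.
Proof.
move=> SS cSN Ne sp pJ Nf hJ.
set X := S0 + N0 in Nf hJ.
have cJX : GRing.comm J X.
  by move: hJ; rewrite mulrBr mulrBl => /addIr.
have cJS : GRing.comm J S0 := commS0 SS cSN Ne cJX.
have eN : N0 = X - S0 by rewrite /X addrC addKr.
have cJN : GRing.comm J N0 by rewrite eN; apply: commrB.
set Mm := J - S0.
have hM : Mm = N0 - (X - J).
  by rewrite /Mm eN opprB [RHS]addrC addrA subrK.
have cNX : GRing.comm N0 (X - J).
  apply: commrB; last exact/commr_sym.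
  by apply: commrD; [exact/commr_sym| exact: commr_refl].
have Mn : Mm ^+ (e + f) = 0.
  rewrite hM; apply: nilp_add => //; first exact: commrN.
  by rewrite exprNn Nf mulr0.
have cSM : GRing.comm S0 Mm by apply: commrB; [exact/commr_sym | exact: commr_refl].
set Z := S0 + S0 + Mm.
have cMZ : GRing.comm Mm Z.
  by apply: commrD; [apply: commrD|exact: commr_refl]; exact/commr_sym.
have eZ : Z = S0 + J by rewrite /Z /Mm addrC addrA addrNK addrC.
have hq : J * J + 1 = Mm * Z.
  rewrite eZ /Mm mulrBl !mulrDr SS -cJS opprD addrACA.
  by rewrite opprK [RHS]addrC addrA subrK.
have q0 : J * J + 1 = 0.
  apply: (sepq sp pJ (e := e + f)).
  by rewrite hq; apply: nilp_mul.
have hZS : Z * - S0 = 2%:R - Mm * S0.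
  by rewrite /Z mulrN !mulrDl SS !opprD opprK -mulr2n addrC.
have M0 : Mm = 0.
  apply: (L1 (E := Mm * S0) (e := e + f) (m := 1)).
    by apply: nilp_mul => //; exact/commr_sym.
  by rewrite expr1 -hZS mulrA -hq q0 mul0r.
by apply/eqP; rewrite -subr_eq0 -/Mm M0.
Qed.
End U.


Section F.
Variables (R : rcfType) (n : nat).
Implicit Types (A B J Q U : 'M[R]_n).

Lemma autABC_iff A B J Q : Q *m J = J *m Q -> (autAB A B Q <-> autABC J A B Q).
Proof.
move=> cQ; split.
  case=> uQ h; split => // u v; rewrite /cform -mulmxA cQ mulmxA.
  by case: (h u v) => -> ->; case: (h u (v *m J)) => -> ->.
case=> uQ _ h; split => // u v.
by case: (h u v) => /(congr1 (@complex.Re R)) /= -> /(congr1 (@complex.Re R)) /= ->.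
Qed.

Lemma finish A B J :
  (forall Q, autAB A B Q -> Q *m J = J *m Q) ->
  (exists Q1 Q3 (c1 c3 : R), [/\ autAB A B Q1, autAB A B Q3 & J = c1 *: Q1 + c3 *: Q3]) ->
  [/\ (forall Q, autAB A B Q -> Q *m J = J *m Q),
      (forall Q, autAB A B Q <-> autABC J A B Q)
    & (forall U : 'M[R]_n,
         invariant_sub A B U <-> ((U *m J <= U)%MS /\ invariant_subC J A B U))].
Proof.
move=> hc [Q1 [Q3 [c1 [c3 [a1 a3 eJ]]]]].
have heq Q : autAB A B Q <-> autABC J A B Q.
  split => [h|h]; first by apply/autABC_iff => //; apply: hc.
  by apply/(autABC_iff _ _ (let: And3 _ x _ := h in x)).
split => // U; split.
  move=> iU; split.
    rewrite eJ mulmxDr -!scalemxAr; apply: addmx_sub; apply: scalemx_sub; exact: iU.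
  by move=> Q /heq; apply: iU.
by case=> _ iU Q /heq; apply: iU.
Qed.
End F.


Section B.
Variables (R : rcfType) (a b : R) (k : nat).
Local Notation m := k.*2.

Definition sgb (x : bool) : R := if x then 1 else -1.
Definition ptn (i : nat) := if odd i then i.-1 else i.+1.
Lemma ptn_lt (i : 'I_m) : (ptn i < m)%N.
Proof. have := ltn_ord i; rewrite /ptn; case: ifP => h; lia. Qed.
Definition pt (i : 'I_m) : 'I_m := Ordinal (ptn_lt i).

Lemma odd_pt i : odd (pt i) = ~~ odd i.
Proof. rewrite /= /ptn; case: ifP => h; lia. Qed.
Lemma half_pt i : (pt i)./2 = i./2.
Proof. rewrite /= /ptn; case: ifP => h; lia. Qed.
Lemma ptK i : pt (pt i) = i.
Proof.
apply: val_inj; rewrite /= /ptn; case hi: (odd i).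
  have -> : odd i.-1 = false by lia.
  lia.
have -> : odd i.+1 = true by lia.
lia.
Qed.
Lemma eq_ordE (i j : 'I_m) : (i == j) = (i./2 == j./2) && (odd i == odd j).
Proof.
apply/eqP/andP => [->|[/eqP h1 /eqP h2]]; first by [].
by apply: val_inj => /=; lia.
Qed.
Lemma eq_ptE (i j : 'I_m) : (j == pt i) = (i./2 == j./2) && (odd j == ~~ odd i).
Proof. by rewrite eq_ordE half_pt odd_pt eq_sym. Qed.

Definition Jh : 'M[R]_m := \matrix_(i, j) (if j == pt i then sgb (odd i) else 0).

Lemma mulJl p (Y : 'M[R]_(m, p)) i j : (Jh *m Y) i j = sgb (odd i) * Y (pt i) j.
Proof.
rewrite mxE (bigD1 (pt i)) //= big1 ?addr0 => [|l nl]; first by rewrite mxE eqxx.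
by rewrite mxE (negbTE nl) mul0r.
Qed.

Lemma mulJr p (Y : 'M[R]_(p, m)) i j : (Y *m Jh) i j = Y i (pt j) * sgb (~~ odd j).
Proof.
rewrite mxE (bigD1 (pt j)) //= big1 ?addr0 => [|l nl].
  by rewrite mxE ptK eqxx odd_pt.
rewrite mxE; case: eqP => [e|]; last by rewrite mulr0.
by move: nl; rewrite e ptK eqxx.
Qed.

Definition W := rJbidiag a b k.

Lemma WE i j : W i j = if i./2 == j./2 then lam a b (odd i) (odd j)
     else if j./2 == (i./2).+1 then (odd i == odd j)%:R else 0.
Proof. by rewrite mxE. Qed.

Lemma JhE i j : Jh i j = if (i./2 == j./2) && (odd j == ~~ odd i) then sgb (odd i) else 0.
Proof. by rewrite mxE eq_ptE. Qed.

Lemma JW : Jh *m W = W *m Jh.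
Proof.
apply/matrixP => i j; rewrite mulJl mulJr !WE !odd_pt !half_pt.
case: (i./2 == j./2); case: (j./2 == (i./2).+1); case: (odd i); case: (odd j);
  rewrite /lam /sgb /=; ring.
Qed.

Lemma sgbN x : sgb (~~ x) = - sgb x.
Proof. by case: x; rewrite /sgb ?opprK. Qed.

Lemma JJ : Jh *m Jh = - 1%:M.
Proof.
apply/matrixP => i j; rewrite mulJl !mxE ptK odd_pt sgbN.
have [_|ne] := eqVneq j i; first by rewrite /= mulrN /sgb; case: (odd i); rewrite ?mulr1 ?mulrN1 ?opprK.
by rewrite mulr0 oppr0.
Qed.

Lemma trJ : Jh^T = - Jh.
Proof.
apply/matrixP => i j; rewrite !mxE.
have -> : (i == pt j) = (j == pt i).
  by apply/eqP/eqP => [->|->]; rewrite ptK.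
case: eqP => [->|]; last by rewrite oppr0.
by rewrite odd_pt sgbN.
Qed.

Definition Nk := W - a%:M - b *: Jh.

Lemma NkE (i j : 'I_m) : j./2 != (i./2).+1 -> Nk i j = 0.
Proof.
move=> hs; rewrite !mxE eq_ptE eq_ordE (negbTE hs).
case: (i./2 == j./2); case: (odd i); case: (odd j); rewrite /lam /sgb /=; ring.
Qed.

Lemma nilp_sup (Y : 'M[R]_m) : (forall i j : 'I_m, j./2 != (i./2).+1 -> Y i j = 0) ->
  forall e (i j : 'I_m), (j./2 < i./2 + e)%N -> (Y ^+ e) i j = 0.
Proof.
move=> hY; elim=> [|e IH] i j hij.
  rewrite expr0 mxE; case: eqP => // e0; rewrite e0 in hij; lia.
rewrite exprSr -mulmxE mxE big1 // => l _.
case: (ltnP l./2 (i./2 + e)) => hl; first by rewrite IH ?mul0r.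
by rewrite hY ?mulr0 //; apply/eqP; lia.
Qed.

Lemma Nk_nilp e : (k <= e)%N -> Nk ^+ e = 0.
Proof.
move=> ke; apply/matrixP => i j; rewrite [RHS]mxE; apply: nilp_sup; first exact: NkE.
by have := ltn_ord j; lia.
Qed.

Lemma trX n (Y : 'M[R]_n) e : (Y^T) ^+ e = (Y ^+ e)^T.
Proof.
elim: e => [|e IH]; first by rewrite !expr0 trmx1.
by rewrite exprS -mulmxE IH -trmx_mul mulmxE -exprSr.
Qed.

Lemma blockX n (A D : 'M[R]_n) e :
  (block_mx A 0 0 D) ^+ e = block_mx (A ^+ e) 0 0 (D ^+ e).
Proof.
elim: e => [|e IH]; first by rewrite !expr0 -scalar_mx_block.
rewrite exprS -mulmxE IH mulmx_block !mulmx0 !mul0mx !addr0 !add0r.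
by rewrite !mulmxE -!exprS.
Qed.

Lemma Jcomm_tr Y : Jh *m Y = Y *m Jh -> Jh *m Y^T = Y^T *m Jh.
Proof.
move=> h; have := congr1 trmx h; rewrite !trmx_mul trJ mulmxN mulNmx.
by move/oppr_inj/esym.
Qed.

Lemma Jconj Y : Jh *m Y = Y *m Jh -> Jh *m Y *m Jh^T = Y.
Proof. by move=> h; rewrite h -mulmxA trJ mulmxN JJ opprK mulmx1. Qed.

Lemma JN : Jh *m Nk = Nk *m Jh.
Proof.
rewrite /Nk !mulmxBr !mulmxBl JW mul_mx_scalar -mul_scalar_mx.
by rewrite -!scalemxAl -!scalemxAr.
Qed.

Definition S0k : 'M[R]_(m + m) := block_mx Jh 0 0 (- Jh).
Definition N0k : 'M[R]_(m + m) := block_mx (b^-1 *: Nk) 0 0 (b^-1 *: Nk^T).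
Definition Gk : 'M[R]_(m + m) := block_mx Jh 0 0 Jh.
Definition Q2k : 'M[R]_(m + m) := block_mx (2%:R)%:M 0 0 ((2%:R)^-1)%:M.
Definition Q2k' : 'M[R]_(m + m) := block_mx ((2%:R)^-1)%:M 0 0 (2%:R)%:M.
Definition Binv : 'M[R]_(m + m) := block_mx 0 (- 1%:M) 1%:M 0.

Lemma BBinv : rJblockB R k *m Binv = 1%:M.
Proof.
rewrite /rJblockB /Binv mulmx_block !(mul0mx, mulmx0, mul1mx, mulmx1, add0r, addr0, mulNmx, mulmxN, opprK, oppr0).
by rewrite -scalar_mx_block.
Qed.

Lemma BinvB : Binv *m rJblockB R k = 1%:M.
Proof.
rewrite /rJblockB /Binv mulmx_block !(mul0mx, mulmx0, mul1mx, mulmx1, add0r, addr0, mulNmx, mulmxN, opprK, oppr0).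
by rewrite -scalar_mx_block.
Qed.

Lemma BX : b != 0 -> b^-1 *: (rJblockA a b k *m Binv - a%:M) = S0k + N0k.
Proof.
move=> b0.
rewrite /rJblockA /Binv mulmx_block !(mul0mx, mulmx0, mul1mx, mulmx1, add0r, addr0, mulNmx, mulmxN, opprK, oppr0).
rewrite [a%:M]scalar_mx_block opp_block_mx add_block_mx scale_block_mx /S0k /N0k add_block_mx.
rewrite !(subr0, addr0, scaler0, oppr0, add0r).
have eW : W - a%:M = Nk + b *: Jh by rewrite /Nk subrK.
have eWt : W^T - a%:M = Nk^T - b *: Jh.
  by rewrite /Nk !linearB /= linearZ /= trJ tr_scalar_mx scalerN opprK addrK.
rewrite -/W eW eWt !scalerDr scalerN !scalerA mulVf // !scale1r addrC.
by rewrite !scalerN !scalerA mulVf // scale1r [in X in _ = block_mx _ _ _ X]addrC.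
Qed.

Lemma BS : S0k *m S0k = - 1%:M.
Proof.
rewrite /S0k mulmx_block !(mul0mx, mulmx0, add0r, addr0, mulNmx, mulmxN, opprK) JJ.
by rewrite (scalar_mx_block m m) opp_block_mx oppr0.
Qed.

Lemma BSN : S0k *m N0k = N0k *m S0k.
Proof.
rewrite /S0k /N0k !mulmx_block !(mul0mx, mulmx0, add0r, addr0, mulNmx, mulmxN).
by rewrite -!scalemxAl -!scalemxAr JN (Jcomm_tr JN).
Qed.

Lemma BN e : (k <= e)%N -> N0k ^+ e = 0.
Proof.
move=> ke.
have h0 : (b^-1 *: Nk) ^+ e = 0.
  apply/matrixP => i j; rewrite [RHS]mxE; apply: nilp_sup; last by have := ltn_ord j; lia.
  by move=> i' j' h; rewrite mxE NkE ?mulr0.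
rewrite /N0k blockX h0 -linearZ /= trX h0 trmx0 block_mx0 //.
Qed.

Lemma GA : Gk *m rJblockA a b k *m Gk^T = rJblockA a b k.
Proof.
rewrite /Gk /rJblockA tr_block_mx !trmx0 !mulmx_block !(mul0mx, mulmx0, add0r, addr0, mulNmx, mulmxN).
by rewrite (Jconj JW) (Jconj (Jcomm_tr JW)).
Qed.

Lemma GB : Gk *m rJblockB R k *m Gk^T = rJblockB R k.
Proof.
rewrite /Gk /rJblockB tr_block_mx !trmx0 !mulmx_block !(mul0mx, mulmx0, add0r, addr0, mulNmx, mulmxN, mulmx1).
by rewrite trJ mulmxN JJ opprK.
Qed.

Lemma GG : Gk *m Gk = - 1%:M.
Proof.
rewrite /Gk mulmx_block !(mul0mx, mulmx0, add0r, addr0) JJ.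
by rewrite (scalar_mx_block m m) opp_block_mx oppr0.
Qed.

Lemma two0 : (2%:R : R) != 0. Proof. by rewrite pnatr_eq0. Qed.

Lemma Q2A : Q2k *m rJblockA a b k *m Q2k^T = rJblockA a b k.
Proof.
rewrite /Q2k /rJblockA tr_block_mx !trmx0 !tr_scalar_mx !mulmx_block !(mul0mx, mulmx0, add0r, addr0).
rewrite !mul_scalar_mx !mul_mx_scalar !scalerA mulVf ?two0 // mulrC mulVf ?two0 //.
by rewrite !scale1r.
Qed.

Lemma Q2B : Q2k *m rJblockB R k *m Q2k^T = rJblockB R k.
Proof.
rewrite /Q2k /rJblockB tr_block_mx !trmx0 !tr_scalar_mx !mulmx_block !(mul0mx, mulmx0, add0r, addr0).
rewrite !mul_scalar_mx !mul_mx_scalar !scalerA mulVf ?two0 // mulrC mulVf ?two0 //.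
by rewrite !scale1r.
Qed.

Lemma Q2Q2' : Q2k *m Q2k' = 1%:M.
Proof.
rewrite /Q2k /Q2k' mulmx_block !(mul0mx, mulmx0, add0r, addr0) -!scalar_mxM.
by rewrite mulVf ?two0 // mulrC mulVf ?two0 // -scalar_mx_block.
Qed.

Definition c1 : R := - 5%:R / 3%:R.
Definition c3 : R := 4%:R / 3%:R.

Lemma BSG : S0k = c1 *: Gk + c3 *: (Gk *m Q2k).
Proof.
rewrite /S0k /Gk /Q2k mulmx_block !(mul0mx, mulmx0, add0r, addr0) !mul_mx_scalar.
rewrite !scale_block_mx add_block_mx !(scaler0, addr0) !scalerA -!scalerDl.
have h3 : (3%:R : R) != 0 by rewrite pnatr_eq0.
have -> : c1 + c3 * 2%:R = 1 by rewrite /c1 /c3; field.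
have -> : c1 + c3 * (2%:R)^-1 = -1 by rewrite /c1 /c3; field; rewrite ?two0 ?h3.
by rewrite scale1r scaleN1r.
Qed.
End B.


Section MxDiag.
Variables (R : rcfType) (p : nat) (p_ : 'I_p -> nat).

Lemma mxdiag_mul (B C : forall i, 'M[R]_(p_ i)) :
  \mxdiag_i B i *m \mxdiag_i C i = \mxdiag_i (B i *m C i).
Proof.
rewrite {2}/mxdiag mul_mxdiag_mxblock /mxdiag; apply: eq_mxblock => i j.
by case: eqVneq => [<-|]; rewrite ?conform_mx_id ?mulmx0.
Qed.

Lemma mxdiag1 : \mxdiag_i (1%:M : 'M[R]_(p_ i)) = 1%:M.
Proof. exact: mxdiagZ. Qed.

Lemma mxdiagX (B : forall i, 'M[R]_(p_ i)) e :
  (\mxdiag_i B i) ^+ e = \mxdiag_i (B i ^+ e).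
Proof.
elim: e => [|e IH]; first by rewrite expr0; under eq_mxdiag do rewrite expr0; rewrite mxdiag1.
by rewrite exprS -mulmxE IH mxdiag_mul; under eq_mxdiag do rewrite mulmxE -exprS.
Qed.

Lemma mxdiag_scale (c : R) (B : forall i, 'M[R]_(p_ i)) :
  c *: \mxdiag_i B i = \mxdiag_i (c *: B i).
Proof.
rewrite -mul_scalar_mx -mxdiagZ mxdiag_mul.
by under eq_mxdiag do rewrite mul_scalar_mx.
Qed.
End MxDiag.

Section Conj.
Variables (R : rcfType) (n N : nat) (T : 'M[R]_(N, n)) (Ti : 'M[R]_(n, N)).
Hypotheses (TTi : T *m Ti = 1%:M) (TiT : Ti *m T = 1%:M).

Lemma conjM (X Y : 'M[R]_N) : (Ti *m X *m T) *m (Ti *m Y *m T) = Ti *m (X *m Y) *m T.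
Proof. by rewrite -!mulmxA (mulmxA T) TTi mul1mx. Qed.

Lemma conjC (X Y : 'M[R]_N) : X *m Y = Y *m X ->
  (Ti *m X *m T) *m (Ti *m Y *m T) = (Ti *m Y *m T) *m (Ti *m X *m T).
Proof. by move=> h; rewrite !conjM h. Qed.

Lemma conjX (X : 'M[R]_N) e : (Ti *m X *m T) ^+ e = Ti *m (X ^+ e) *m T.
Proof.
elim: e => [|e IH]; first by rewrite !expr0 mulmx1 TiT.
by rewrite exprS -mulmxE IH conjM mulmxE -exprS.
Qed.

Lemma conjD (X Y : 'M[R]_N) : Ti *m (X + Y) *m T = Ti *m X *m T + Ti *m Y *m T.
Proof. by rewrite mulmxDr mulmxDl. Qed.

Lemma conjZ c (X : 'M[R]_N) : Ti *m (c *: X) *m T = c *: (Ti *m X *m T).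
Proof. by rewrite -scalemxAr -scalemxAl. Qed.

Lemma conjN (X : 'M[R]_N) : Ti *m (- X) *m T = - (Ti *m X *m T).
Proof. by rewrite mulmxN mulNmx. Qed.

Lemma conj1 : Ti *m 1%:M *m T = 1%:M.
Proof. by rewrite mulmx1. Qed.

Variables (A B : 'M[R]_n).

Lemma aut_formE (M Q : 'M[R]_n) : Q *m M *m Q^T = M ->
  forall u v, bform M (u *m Q) (v *m Q) = bform M u v.
Proof.
move=> h u v; rewrite /bform trmx_mul.
by rewrite !mulmxA -(mulmxA _ Q M) -(mulmxA _ (Q *m M)) h.
Qed.

Lemma autconj (Yb Yb' : 'M[R]_N) :
  Yb *m (T *m A *m T^T) *m Yb^T = T *m A *m T^T ->
  Yb *m (T *m B *m T^T) *m Yb^T = T *m B *m T^T ->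
  Yb *m Yb' = 1%:M -> autAB A B (Ti *m Yb *m T).
Proof.
move=> hYA hYB hY; split.
  have := @mulmx1_unit _ _ (Ti *m Yb *m T) (Ti *m Yb' *m T).
  by rewrite conjM hY conj1 => /(_ erefl) [].
have TT : T^T *m Ti^T = 1%:M by rewrite -trmx_mul TiT trmx1.
have e M : Yb *m (T *m M *m T^T) *m Yb^T = T *m M *m T^T ->
    (Ti *m Yb *m T) *m M *m (Ti *m Yb *m T)^T = M.
  move=> hM; transitivity (Ti *m (Yb *m (T *m M *m T^T) *m Yb^T) *m Ti^T).
    by rewrite !trmx_mul !mulmxA.
  by rewrite hM !mulmxA TiT mul1mx -mulmxA TT mulmx1.
by move=> u v; split; apply: aut_formE; apply: e.
Qed.
End Conj.

Lemma aut_mul (R : rcfType) n (A B Q1 Q2 : 'M[R]_n) :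
  autAB A B Q1 -> autAB A B Q2 -> autAB A B (Q1 *m Q2).
Proof.
case=> u1 h1 [u2 h2]; split; first by rewrite unitmx_mul u1 u2.
move=> u v; rewrite !mulmxA.
by case: (h2 (u *m Q1) (v *m Q1)) => -> ->; apply: h1.
Qed.

Section Global.
Variables (R : rcfType) (a b : R) (mm : nat) (k : 'I_mm -> nat).
Local Notation N := (\sum_(i < mm) ((k i).*2 + (k i).*2))%N.

Lemma global n (A B : 'M[R]_n) (T : 'M[R]_(N, n)) (Ti : 'M[R]_(n, N)) :
  b != 0 -> T *m Ti = 1%:M -> Ti *m T = 1%:M -> B \in unitmx ->
  T *m A *m T^T = \mxdiag_i rJblockA a b (k i) ->
  T *m B *m T^T = \mxdiag_i rJblockB R (k i) ->
  let S0 := Ti *m \mxdiag_i S0k R (k i) *m T in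
  let N0 := Ti *m \mxdiag_i N0k a b (k i) *m T in
  [/\ b^-1 *: (Pop A B - a%:M) = S0 + N0, S0 *m S0 = - 1%:M, S0 *m N0 = N0 *m S0,
      N0 ^+ (\sum_i k i) = 0 &
      exists Q1 Q3, [/\ autAB A B Q1, autAB A B Q3 & S0 = c1 R *: Q1 + c3 R *: Q3]].
Proof.
move=> b0 TTi TiT uB hA hB S0 N0.
have TT : T^T *m Ti^T = 1%:M by rewrite -trmx_mul TiT trmx1.
have TT' : Ti^T *m T^T = 1%:M by rewrite -trmx_mul TTi trmx1.
have eA : A = Ti *m (T *m A *m T^T) *m Ti^T.
  by rewrite !mulmxA TiT mul1mx -mulmxA TT mulmx1.
have eB : B = Ti *m (T *m B *m T^T) *m Ti^T.
  by rewrite !mulmxA TiT mul1mx -mulmxA TT mulmx1.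
set Binvb := \mxdiag_i Binv R (k i).
have BBi : \mxdiag_i rJblockB R (k i) *m Binvb = 1%:M.
  by rewrite mxdiag_mul; under eq_mxdiag do rewrite BBinv; rewrite mxdiag1.
have einv : invmx B = T^T *m Binvb *m T.
  have h : B *m (T^T *m Binvb *m T) = 1%:M.
    by rewrite {1}eB hB !mulmxA -(mulmxA _ Ti^T) TT' mulmx1 -(mulmxA _ _ Binvb) BBi mulmx1 TiT.
  by rewrite -[LHS]mulmx1 -h (mulmxA (invmx B) B) (mulVmx uB) mul1mx.
have eP : Pop A B = Ti *m (\mxdiag_i rJblockA a b (k i) *m Binvb) *m T.
  by rewrite /Pop einv {1}eA hA !mulmxA -(mulmxA _ Ti^T) TT' mulmx1.
have ea : a%:M = Ti *m a%:M *m T :> 'M[R]_n.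
  by rewrite mul_mx_scalar -scalemxAl TiT scalemx1.
split.
- rewrite eP ea -conjN -conjD -conjZ /S0 /N0 -conjD.
  congr (_ *m _ *m _).
  rewrite mxdiag_mul -mxdiagZ -mxdiagN -mxdiagD mxdiag_scale -mxdiagD.
  by apply: eq_mxdiag => i; rewrite BX.
- rewrite /S0 (conjM TTi) mxdiag_mul; under eq_mxdiag do rewrite BS.
  by rewrite mxdiagN mxdiag1 conjN (conj1 TiT).
- rewrite /S0 /N0; apply: (conjC TTi).
  by rewrite 2!mxdiag_mul; apply: eq_mxdiag => i; apply: BSN.
- rewrite /N0 (conjX TTi TiT) mxdiagX.
  rewrite (@eq_mxdiag _ _ _ _ (fun i => 0)); last first.
    by move=> i; rewrite BN // (bigD1 i) //= leq_addr.
  by rewrite mxdiag0 mulmx0 mul0mx.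
pose Gb := \mxdiag_i Gk R (k i).
pose Q2b := \mxdiag_i Q2k R (k i).
have aG : autAB A B (Ti *m Gb *m T).
  apply: (autconj TTi TiT (Yb' := - Gb)).
  - by rewrite hA /Gb tr_mxdiag 2!mxdiag_mul; apply: eq_mxdiag => i; apply: GA.
  - by rewrite hB /Gb tr_mxdiag 2!mxdiag_mul; apply: eq_mxdiag => i; apply: GB.
  - by rewrite mulmxN /Gb mxdiag_mul; under eq_mxdiag do rewrite GG; rewrite mxdiagN mxdiag1 opprK.
have aQ : autAB A B (Ti *m Q2b *m T).
  apply: (autconj TTi TiT (Yb' := \mxdiag_i Q2k' R (k i))).
  - by rewrite hA /Q2b tr_mxdiag 2!mxdiag_mul; apply: eq_mxdiag => i; apply: Q2A.
  - by rewrite hB /Q2b tr_mxdiag 2!mxdiag_mul; apply: eq_mxdiag => i; apply: Q2B.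
  - by rewrite /Q2b mxdiag_mul; under eq_mxdiag do rewrite Q2Q2'; rewrite mxdiag1.
exists (Ti *m Gb *m T), ((Ti *m Gb *m T) *m (Ti *m Q2b *m T)); split.
- exact: aG.
- exact: aut_mul.
rewrite (conjM TTi) -!conjZ -conjD /S0. congr (_ *m _ *m _).
rewrite /Gb /Q2b mxdiag_mul !mxdiag_scale -mxdiagD.
by apply: eq_mxdiag => i; rewrite BSG.
Qed.
End Global.


Lemma key (R : rcfType) n (X S0 N0 J : 'M[R]_n) e f (p : {poly R}) :
  S0 *m S0 = - 1%:M -> S0 *m N0 = N0 *m S0 -> N0 ^+ e = 0 -> X = S0 + N0 ->
  separable_poly p -> peval_mx p J = 0 -> (X - J) ^+ f = 0 ->
  J *m (X - J) = (X - J) *m J ->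
  J = S0 /\ (forall Y, Y *m X = X *m Y -> Y *m S0 = S0 *m Y).
Proof.
case: n X S0 N0 J => [|n] X S0 N0 J.
  by move=> *; split => [|Y _]; rewrite ?[J]flatmx0 ?[S0]flatmx0 ?[Y *m _]flatmx0 ?[_ *m Y]flatmx0.
move=> hS hSN hN -> sp pJ hf hJ; split.
  exact: (uniqJ hS hSN hN sp pJ hf hJ).
by move=> Y hY; apply: (commS0 hS hSN hN hY).
Qed.

Lemma form_eq (R : rcfType) n (M1 M2 : 'M[R]_n) :
  (forall u v, bform M1 u v = bform M2 u v) -> M1 = M2.
Proof.
move=> h; apply/matrixP => i j; have := h (delta_mx 0 i) (delta_mx 0 j).
by rewrite /bform !trmx_delta -!rowE -!colE !mxE.
Qed.

Lemma autP (R : rcfType) n (A B Q : 'M[R]_n) : B \in unitmx -> autAB A B Q ->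
  Q *m Pop A B = Pop A B *m Q.
Proof.
move=> uB [uQ h].
have QM M : (forall u v, bform M (u *m Q) (v *m Q) = bform M u v) -> Q *m M *m Q^T = M.
  move=> hM; apply: form_eq => u v; rewrite -hM /bform trmx_mul !mulmxA //.
have QAQ : Q *m A *m Q^T = A by apply: QM => u v; case: (h u v).
have QBQ : Q *m B *m Q^T = B by apply: QM => u v; case: (h u v).
have uQt : Q^T \in unitmx by rewrite unitmx_tr.
have e1 : Q *m A = A *m invmx Q^T by rewrite -{2}QAQ mulmxK.
have e2 : Q *m B = B *m invmx Q^T by rewrite -{2}QBQ mulmxK.
have e3 : invmx B *m Q = invmx Q^T *m invmx B.
  rewrite -[LHS]mulmx1 -(mulmxV uB) mulmxA -(mulmxA (invmx B) Q B) e2.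
  by rewrite mulmxA (mulVmx uB) mul1mx.
by rewrite /Pop mulmxA e1 -mulmxA -e3 mulmxA.
Qed.

Unset Implicit Arguments.

Theorem theorem9 (R : rcfType) (n : nat) (A B : 'M[R]_n) (a b : R)
    (J : 'M[R]_n) :
  A^T = - A -> B^T = - B -> B \in unitmx -> b != 0 ->
  JK_only_real_jordan a b A B ->
  semisimple_part (b^-1 *: (Pop A B - a%:M)) J ->
  [/\ (forall Q, autAB A B Q -> Q *m J = J *m Q),
      (forall Q, autAB A B Q <-> autABC J A B Q)
    & (forall U : 'M[R]_n,
         invariant_sub A B U <-> ((U *m J <= U)%MS /\ invariant_subC J A B U))].
Proof.
move=> _ _ uB b0 [mm [k [T [rfT rflT hA hB]]]] [[p [sp pJ]] [f hf] hJ].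
case/row_freeP: rfT => Tr TTr.
case/row_fullP: rflT => Tl TlT.
have eTl : Tl = Tr by rewrite -[Tl]mulmx1 -TTr mulmxA TlT mul1mx.
rewrite eTl in TlT.
move: (global b0 TTr TlT uB hA hB) => /=.
case=> eX hSS hSN hN [Q1 [Q3 [a1 a3 eS]]].
have [eJ hY] := key hSS hSN hN eX sp pJ hf hJ.
apply: finish.
  move=> Q aQ; rewrite eJ; apply: hY.
  rewrite -scalemxAr -scalemxAl mulmxBr mulmxBl (autP uB aQ) scalar_mxC //.
exists Q1, Q3, (c1 R), (c3 R); split; [exact: a1 | exact: a3 | rewrite eJ; exact: eS].
Qed.
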